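(* Let $I\in\{0,1\}^{n\times m}$ and let $\mathcal{G}\subseteq\mathcal{B}(\mathcal{E}(I))$ be such that $\mathcal{E}(I)=A_{\mathcal{G}}\circ B_{\mathcal{G}}$. Then every set $\mathcal{F}\subseteq\mathcal{B}(I)$ that contains, for each $\langle C,D\rangle\in\mathcal{G}$, at least one concept from the interval $\mathcal{I}_{C,D}$ of $\mathcal{B}(I)$ satisfies $I=A_{\mathcal{F}}\circ B_{\mathcal{F}}$.
   Context: For any $K\in\{0,1\}^{n\times m}$, with $X=\{1,\dots,n\}$, $Y=\{1,\dots,m\}$, define for $C\subseteq X$, $D\subseteq Y$: $C^{\uparrow_K}=\{j\in Y\mid \forall i\in C: K_{ij}=1\}$, $D^{\downarrow_K}=\{i\in X\mid \forall j\in D: K_{ij}=1\}$, and $\mathcal{B}(K)=\{\langle C,D\rangle\mid C^{\uparrow_K}=D, D^{\downarrow_K}=C\}$, ordered by $\langle C_1,D_1\rangle\leq\langle C_2,D_2\rangle$ iff $C_1\subseteq C_2$. For $\mathcal{F}=\{\langle C_1,D_1\rangle,\dots,\langle C_p,D_p\rangle\}\subseteq\mathcal{B}(K)$, $(A_{\mathcal{F}})_{il}=1$ iff $i\in C_l$ and $(B_{\mathcal{F}})_{lj}=1$ iff $j\in D_l$; $\circ$ is the Boolean product $(A\circ B)_{ij}=\max_l\min(A_{il},B_{lj})$. For the given $I$: $\gamma(C)=\langle C^{\uparrow_I\downarrow_I},C^{\uparrow_I}\rangle$, $\mu(D)=\langle D^{\downarrow_I},D^{\downarrow_I\uparrow_I}\rangle$,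 $\mathcal{I}_{C,D}=\{c\in\mathcal{B}(I)\mid\gamma(C)\leq c\leq\mu(D)\}$, $\mathcal{I}_{ij}=\mathcal{I}_{\{i\},\{j\}}$. $\mathcal{E}(I)\in\{0,1\}^{n\times m}$ is defined by $\mathcal{E}(I)_{ij}=1$ iff $\mathcal{I}_{ij}$ is non-empty and minimal w.r.t. $\subseteq$ among the non-empty sets $\mathcal{I}_{i'j'}$. *)

(* Defs.v *)
From mathcomp Require Import all_boot all_order all_algebra.
Set Implicit Arguments. Unset Strict Implicit. Unset Printing Implicit Defensive.

(* A Boolean matrix K in {0,1}^{n x m} is 'M[bool]_(n, m); X = 'I_n, Y = 'I_m. *)
Definition concept (n m : nat) := ({set 'I_n} * {set 'I_m})%type.

Section Defs.
Variables n m : nat.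

Definition up (K : 'M[bool]_(n, m)) (C : {set 'I_n}) : {set 'I_m} :=
  [set j | [forall i in C, K i j]].
Definition down (K : 'M[bool]_(n, m)) (D : {set 'I_m}) : {set 'I_n} :=
  [set i | [forall j in D, K i j]].

Definition is_concept (K : 'M[bool]_(n, m)) (c : concept n m) : bool :=
  (up K c.1 == c.2) && (down K c.2 == c.1).

Definition concepts (K : 'M[bool]_(n, m)) : {set concept n m} :=
  [set c | is_concept K c].

Definition concept_le (c1 c2 : concept n m) : bool := c1.1 \subset c2.1.

Definition boolprod p (A : 'M[bool]_(n, p)) (B : 'M[bool]_(p, m)) : 'M[bool]_(n, m) :=
  \matrix_(i, j) [exists l : 'I_p, A i l && B l j].

Definition Amat (F : {set concept n m}) : 'M[bool]_(n, #|F|) :=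
  \matrix_(i, l) (i \in (@enum_val _ (mem F) l : concept n m).1).
Definition Bmat (F : {set concept n m}) : 'M[bool]_(#|F|, m) :=
  \matrix_(l, j) (j \in (@enum_val _ (mem F) l : concept n m).2).

Variable I : 'M[bool]_(n, m).

Definition gamma (C : {set 'I_n}) : concept n m := (down I (up I C), up I C).
Definition mu (D : {set 'I_m}) : concept n m := (down I D, up I (down I D)).

Definition cinterval (C : {set 'I_n}) (D : {set 'I_m}) : {set concept n m} :=
  [set c | is_concept I c && concept_le (gamma C) c && concept_le c (mu D)].

Definition Iij (i : 'I_n) (j : 'I_m) : {set concept n m} := cinterval [set i] [set j].

Definition E : 'M[bool]_(n, m) :=
  \matrix_(i, j) ((Iij i j != set0) &&
     [forall i' : 'I_n, forall j' : 'I_m,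
        (Iij i' j' != set0) ==> ~~ (Iij i' j' \proper Iij i j)]).

End Defs.

(* Main.v *)
Require Import Defs.
From mathcomp Require Import all_boot all_order all_algebra.

Section Aux.
Variables n m : nat.
Implicit Types (K : 'M[bool]_(n, m)) (C : {set 'I_n}) (D : {set 'I_m}).

Lemma upP K C j : reflect (forall i, i \in C -> K i j) (j \in up K C).
Proof. rewrite inE; exact: forall_inP. Qed.

Lemma downP K D i : reflect (forall j, j \in D -> K i j) (i \in down K D).
Proof. rewrite inE; exact: forall_inP. Qed.

Lemma sub_down_up K C : C \subset down K (up K C).
Proof. apply/subsetP=> i iC; apply/downP=> j /upP; apply; exact: iC. Qed.

Lemma up_anti K C1 C2 : C1 \subset C2 -> up K C2 \subset up K C1.
Proof. move=> /subsetP s; apply/subsetP=> j /upP H; apply/upP=> i /s; exact: H. Qed.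

Lemma down_anti K D1 D2 : D1 \subset D2 -> down K D2 \subset down K D1.
Proof. move=> /subsetP s; apply/subsetP=> i /downP H; apply/downP=> j /s; exact: H. Qed.

Lemma up_down_up K C : up K (down K (up K C)) = up K C.
Proof.
apply/eqP; rewrite eqEsubset; apply/andP; split.
  by apply: up_anti; apply: sub_down_up.
apply/subsetP=> j ju; apply/upP=> i /downP; apply; exact: ju.
Qed.

Lemma gamma_concept K C : is_concept K (gamma K C).
Proof. by rewrite /is_concept /gamma /= up_down_up !eqxx. Qed.

Lemma cintervalP K C D c : c \in cinterval K C D =
  [&& is_concept K c, down K (up K C) \subset c.1 & c.1 \subset down K D].
Proof. by rewrite inE /concept_le /gamma /mu /= -andbA. Qed.

Lemma Iij_sub K C D i j : i \in C -> j \in D ->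
  cinterval K C D \subset Iij K i j.
Proof.
move=> iC jD; apply/subsetP=> c; rewrite /Iij !cintervalP.
case/and3P=> -> h1 h2; apply/andP; split=> //; apply/andP; split.
  apply: (subset_trans _ h1); apply: down_anti; apply: up_anti.
  by rewrite sub1set.
apply: (subset_trans h2); apply: down_anti; by rewrite sub1set.
Qed.

Lemma Iij_mem K i j c : c \in Iij K i j -> (i \in c.1) && (j \in c.2).
Proof.
rewrite /Iij cintervalP => /and3P [/andP [/eqP e2 _] h1 h2].
apply/andP; split.
  apply: (subsetP h1); apply: (subsetP (sub_down_up K _)); exact: set11.
rewrite -e2; apply/upP=> i' /(subsetP h2) /downP; apply; exact: set11.
Qed.

Lemma Iij_nonempty K i j : K i j -> gamma K [set i] \in Iij K i j.
Proof.
move=> Kij; rewrite /Iij cintervalP gamma_concept subxx /=.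
apply: down_anti; rewrite sub1set; apply/upP=> i'; rewrite inE => /eqP ->; exact: Kij.
Qed.

Lemma boolprodP p (A : 'M[bool]_(n, p)) (B : 'M[bool]_(p, m)) i j :
  reflect (exists l, A i l && B l j) (boolprod A B i j).
Proof. rewrite /boolprod mxE; exact: existsP. Qed.

Lemma min_E K : forall k i j, #|Iij K i j| <= k -> Iij K i j != set0 ->
  exists i', exists j', E K i' j' /\ Iij K i' j' \subset Iij K i j.
Proof.
elim=> [|k IH] i j.
  by rewrite leqn0 cards_eq0 => ->.
move=> hk ne.
case hE: (E K i j); first by exists i, j; split.
move: hE; rewrite /E mxE ne /= => /negbT; rewrite negb_forall => /existsP [i'].
rewrite negb_forall => /existsP [j']; rewrite negb_imply negbK => /andP [ne' pr].
have [i'' [j'' [h1 h2]]] : exists i'', exists j'', E K i'' j'' /\ Iij K i'' j'' \subset Iij K i' j'.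
  apply: IH ne'; rewrite -ltnS; apply: leq_trans hk; exact: proper_card.
exists i'', j''; split => //; apply: subset_trans h2 _; exact: proper_sub.
Qed.

End Aux.

Theorem theorem3 (n m : nat) (I : 'M[bool]_(n, m)) (G : {set concept n m}) :
  G \subset concepts (E I) ->
  E I = boolprod (Amat G) (Bmat G) ->
  forall F : {set concept n m},
    F \subset concepts I ->
    (forall c, c \in G -> exists2 d, d \in F & d \in cinterval I c.1 c.2) ->
    I = boolprod (Amat F) (Bmat F).
Proof.
move=> _ hEG F hF hG.
apply/matrixP=> i j.
apply/idP/idP.
- move=> Kij.
  have ne : Iij I i j != set0.
    by apply/set0Pn; exists (gamma I [set i]); apply: Iij_nonempty.
  have [i' [j' [hE hsub]]] := @min_E _ _ I _ i j (leqnn _) ne.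
  move: hE; rewrite hEG => /boolprodP [l]; rewrite !mxE => /andP [h1 h2].
  have [d dF dI] := hG _ (enum_valP l).
  have := @Iij_sub _ _ I _ _ _ _ h1 h2; move/subsetP => s1.
  have /andP [di dj] := @Iij_mem _ _ I _ _ _ (subsetP hsub _ (s1 _ dI)).
  apply/existsP; exists (enum_rank_in dF d); rewrite !mxE enum_rankK_in //.
  by rewrite di dj.
- case/boolprodP=> l; rewrite !mxE => /andP [h1 h2].
  have := subsetP hF _ (enum_valP l); rewrite inE /is_concept => /andP [/eqP e _].
  by move: h2; rewrite -e => /upP; apply.
Qed.
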